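(* $R_4(VS)=58$: there is a 4-coloring of $[57]$ in which no two integers of the same color differ by a positive perfect square, and every 4-coloring of $[58]$ contains integers $a<b$ of the same color with $b-a$ a positive perfect square.
   Context: For $n\in\mathbb{N}$, $[n]=\{1,\dots,n\}$; a $c$-coloring of $[n]$ is a function $[n]\to[c]$. $R_c(VS)$ (the van der Square number) is the least positive integer $n$ such that every $c$-coloring of $[n]$ contains integers $a<b$ in $[n]$ of the same color with $b-a=x^2$ for some positive integer $x$. *)

(* Defs.v *)
From mathcomp Require Import all_boot.

(* A c-coloring of [n] = {1,...,n} is modelled as a function col : nat -> 'I_c;
   only its values on 1..n matter. *)

Definition mono_square_pair (c n : nat) (col : nat -> 'I_c) : Prop :=
  exists a b x : nat,
    [/\ 1 <= a < b, b <= n, 0 < x, b - a = x ^ 2 & col a = col b].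

Definition every_coloring_mono (c n : nat) : Prop :=
  forall col : nat -> 'I_c, @mono_square_pair c n col.

Definition is_van_der_square_number (c N : nat) : Prop :=
  [/\ 0 < N, every_coloring_mono c N &
      forall m, 0 < m -> m < N -> ~ every_coloring_mono c m].

(* Main.v *)
Require Import Defs.
From mathcomp Require Import all_boot all_fingroup zify.
From Stdlib Require Import Classical.

Fixpoint pickf {T} (x0 : T) (ks : seq nat) (l : seq T) : seq T :=
  match ks with [::] => [::] | k :: ks' => let l' := drop k l in head x0 l' :: pickf x0 ks' l' end.
Definition gaps := [:: 0;3;5;7;9;11;13].
Definition fgaps := [:: 1;3;5;7;9;11;13].

Inductive dom := Dom of bool & bool & bool & bool.
Definition dget (d : dom) (c : nat) : bool :=
  let: Dom a0 a1 a2 a3 := d in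
  match c with 0 => a0 | 1 => a1 | 2 => a2 | _ => a3 end.
Definition dsing (d : dom) : option nat :=
  match d with
  | Dom true false false false => Some 0
  | Dom false true false false => Some 1
  | Dom false false true false => Some 2
  | Dom false false false true => Some 3
  | _ => None end.
Definition dremove (d : dom) (o : option nat) : dom :=
  let: Dom a0 a1 a2 a3 := d in
  match o with
  | Some 0 => Dom false a1 a2 a3
  | Some 1 => Dom a0 false a2 a3
  | Some 2 => Dom a0 a1 false a3
  | Some 3 => Dom a0 a1 a2 false
  | _ => d end.
Definition demp (d : dom) : bool :=
  match d with Dom false false false false => true | _ => false end.
Definition dempty := Dom false false false false.
Definition dsingle (c : nat) : dom :=
  match c with 0 => Dom true false false false | 1 => Dom false true false false
  | 2 => Dom false false true false | _ => Dom false false false true end.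

Fixpoint pass_aux (pre S : seq (option nat)) (D : seq dom) : seq dom :=
  match D, S with
  | d :: D', s :: S' =>
      foldl dremove d (pickf None gaps pre ++ pickf None fgaps S) :: pass_aux (s :: pre) S' D'
  | _, _ => [::]
  end.
Definition pass (D : seq dom) := pass_aux [::] (map dsing D) D.

Definition deqb (d e : dom) : bool :=
  let: Dom a0 a1 a2 a3 := d in let: Dom b0 b1 b2 b3 := e in
  if eqb a0 b0 then if eqb a1 b1 then if eqb a2 b2 then eqb a3 b3 else false else false else false.
Fixpoint seqeqb (D E : seq dom) : bool :=
  match D, E with
  | d :: D', e :: E' => if deqb d e then seqeqb D' E' else false
  | [::], [::] => true
  | _, _ => false end.

Fixpoint prop_aux (D D' : seq dom) (fuel : nat) : seq dom :=
  match fuel with 0 => D' | f.+1 => if seqeqb D D' then D' else prop_aux D' (pass D') f end.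
Definition prop (D : seq dom) := prop_aux D (pass D) 29.

Fixpoint hasemp (D : seq dom) : bool :=
  match D with [::] => false | d :: D' => if demp d then true else hasemp D' end.

Inductive tree := Leaf | Node of nat & tree & tree & tree & tree.

Fixpoint chk (t : tree) (D : seq dom) : bool :=
  let D' := prop D in
  if hasemp D' then true else
  match t with
  | Leaf => false
  | Node v t0 t1 t2 t3 =>
    if v < 58 then
      if (if dget (nth dempty D' v) 0 then chk t0 (set_nth dempty D' v (dsingle 0)) else true) then
      if (if dget (nth dempty D' v) 1 then chk t1 (set_nth dempty D' v (dsingle 1)) else true) then
      if (if dget (nth dempty D' v) 2 then chk t2 (set_nth dempty D' v (dsingle 2)) else true) then
      (if dget (nth dempty D' v) 3 then chk t3 (set_nth dempty D' v (dsingle 3)) else true)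
      else false else false else false
    else false
  end.

Definition D0 := dsingle 0 :: dsingle 1 :: nseq 56 (Dom true true true true).
Definition T0 := (Node 16 Leaf (Node 25 Leaf Leaf (Node 26 (Node 41 (Node 32 Leaf Leaf (Node 36 Leaf (Node 27 Leaf Leaf (Node 40 Leaf Leaf (Node 4 Leaf (Node 29 Leaf Leaf Leaf Leaf) Leaf (Node 29 Leaf Leaf Leaf Leaf)) (Node 4 Leaf (Node 29 (Node 7 Leaf Leaf Leaf (Node 18 Leaf Leaf Leaf Leaf)) Leaf Leaf Leaf) Leaf Leaf)) (Node 28 (Node 29 Leaf (Node 30 Leaf Leaf Leaf Leaf) Leaf Leaf) (Node 29 (Node 31 (Node 5 Leaf Leaf (Node 18 Leaf Leaf Leaf Leaf) Leaf) (Node 5 Leaf Leaf (Node 18 Leaf Leaf Leaf Leaf) Leaf) Leaf Leaf) Leaf Leaf Leaf) Leaf Leaf)) Leaf (Node 20 (Node 27 Leaf Leaf (Node 29 Leaf Leaf Leaf (Node 30 Leaf Leaf Leaf Leaf)) Leaf) Leaf Leaf Leaf)) (Node 36 Leaf (Node 27 Leaf Leaf (Node 28 (Node 29 Leaf (Node 30 Leaf Leaf Leaf Leaf) Leaf Leaf) (Node 29 (Node 31 (Node 5 Leaf Leaf (Node 18 Leaf Leaf Leaf Leaf) Leaf) (Node 5 Leaf Leaf (Node 18 Leaf Leaf Leaf Leaf) Leaf) Leaf Leaf) Leaf Leaf Leaf) Leaf Leaf) (Node 40 Leaf Leaf (Node 4 Leaf (Node 29 Leaf Leaf Leaf Leaf)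 Leaf (Node 29 Leaf Leaf Leaf Leaf)) (Node 4 Leaf (Node 29 (Node 7 Leaf Leaf (Node 18 Leaf Leaf Leaf Leaf) Leaf) Leaf Leaf Leaf) Leaf Leaf))) (Node 20 (Node 27 Leaf (Node 19 Leaf (Node 29 Leaf Leaf Leaf Leaf) Leaf Leaf) Leaf (Node 29 Leaf Leaf Leaf Leaf)) Leaf Leaf Leaf) Leaf)) Leaf Leaf (Node 32 (Node 37 (Node 21 Leaf (Node 30 Leaf Leaf (Node 31 Leaf Leaf Leaf Leaf) Leaf) Leaf Leaf) Leaf (Node 28 Leaf (Node 27 Leaf Leaf (Node 29 (Node 20 Leaf Leaf Leaf Leaf) Leaf Leaf Leaf) (Node 29 Leaf Leaf Leaf Leaf)) Leaf (Node 27 Leaf Leaf (Node 29 (Node 20 Leaf Leaf Leaf Leaf) Leaf Leaf Leaf) Leaf)) Leaf) Leaf (Node 36 Leaf (Node 27 Leaf Leaf (Node 40 (Node 5 (Node 21 Leaf (Node 7 Leaf Leaf Leaf (Node 18 Leaf Leaf Leaf Leaf)) Leaf Leaf) Leaf (Node 30 Leaf Leaf Leaf Leaf) Leaf) Leaf (Node 4 Leaf (Node 29 (Node 18 Leaf Leaf Leaf Leaf) Leaf Leaf (Node 30 Leaf Leaf (Node 7 Leaf Leaf Leaf Leaf) Leaf)) Leaf (Node 29 Leaf (Node 30 Leaf Leaf (Node 7 Leaf Leaf Leaf Leaf) Leaf) Leaf Leaf)) Leaf) (Node 28 (Node 29 Leaf (Node 30 Leaf Leaf Leaf Leaf) Leaf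 (Node 30 Leaf Leaf Leaf Leaf)) (Node 29 Leaf Leaf Leaf (Node 30 Leaf Leaf (Node 40 Leaf Leaf (Node 7 Leaf Leaf Leaf (Node 6 Leaf Leaf Leaf Leaf)) Leaf) Leaf)) Leaf Leaf)) Leaf (Node 20 (Node 21 Leaf (Node 27 Leaf Leaf (Node 29 Leaf Leaf Leaf Leaf) Leaf) Leaf Leaf) Leaf (Node 27 Leaf (Node 19 Leaf Leaf Leaf Leaf) (Node 4 Leaf (Node 7 (Node 8 Leaf Leaf Leaf Leaf) Leaf Leaf Leaf) Leaf (Node 7 (Node 8 Leaf Leaf (Node 18 (Node 19 Leaf Leaf Leaf Leaf) Leaf Leaf Leaf) Leaf) Leaf Leaf Leaf)) Leaf) Leaf)) Leaf)) Leaf Leaf (Node 41 (Node 32 Leaf Leaf (Node 36 Leaf (Node 27 (Node 28 Leaf (Node 29 (Node 30 Leaf Leaf Leaf Leaf) Leaf Leaf Leaf) Leaf (Node 29 (Node 30 Leaf Leaf Leaf Leaf) (Node 30 Leaf Leaf Leaf Leaf) Leaf Leaf)) Leaf (Node 40 Leaf Leaf (Node 4 Leaf (Node 29 Leaf Leaf Leaf Leaf) Leaf (Node 29 Leaf Leaf Leaf Leaf)) (Node 4 Leaf (Node 29 (Node 30 Leaf Leaf Leaf Leaf) Leaf Leaf Leaf) Leaf Leaf)) Leaf) Leaf (Node 20 (Node 29 Leaf Leaf Leaf (Node 38 Leaf Leaf Leaf Leaf)) Leaf Leaf Leaf)) (Node 36 Leaf (Node 27 (Node 28 Leaf (Node 29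 (Node 30 Leaf Leaf Leaf Leaf) Leaf Leaf Leaf) Leaf Leaf) Leaf (Node 28 (Node 29 Leaf (Node 30 Leaf Leaf Leaf Leaf) Leaf Leaf) (Node 29 (Node 30 Leaf Leaf Leaf Leaf) Leaf Leaf Leaf) Leaf Leaf) Leaf) (Node 20 (Node 27 Leaf (Node 29 Leaf Leaf Leaf Leaf) Leaf Leaf) Leaf Leaf Leaf) Leaf)) Leaf Leaf (Node 32 (Node 37 (Node 21 Leaf (Node 30 (Node 29 Leaf Leaf Leaf Leaf) Leaf (Node 31 Leaf (Node 27 (Node 40 (Node 18 Leaf Leaf Leaf Leaf) Leaf (Node 6 Leaf Leaf Leaf (Node 18 Leaf Leaf Leaf Leaf)) Leaf) Leaf (Node 40 (Node 18 Leaf Leaf Leaf Leaf) Leaf (Node 6 Leaf Leaf Leaf (Node 18 Leaf Leaf Leaf Leaf)) Leaf) Leaf) Leaf (Node 6 Leaf (Node 39 Leaf Leaf Leaf Leaf) (Node 8 (Node 18 Leaf Leaf Leaf Leaf) Leaf Leaf Leaf) Leaf)) Leaf) Leaf (Node 20 (Node 29 Leaf Leaf Leaf (Node 19 Leaf Leaf Leaf (Node 27 (Node 18 Leaf Leaf Leaf Leaf) Leaf Leaf Leaf))) Leaf (Node 4 Leaf (Node 40 (Node 7 Leaf Leaf (Node 9 Leaf Leaf Leaf Leaf) Leaf) Leaf (Node 31 Leaf (Node 27 (Node 7 Leaf Leaf (Node 6 Leaf Leaf Leaf (Node 18 Leaf Leaf Leaf Leaf)) Leaf) Leaf (Node 7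 Leaf Leaf (Node 6 Leaf Leaf Leaf Leaf) Leaf) Leaf) Leaf (Node 19 Leaf Leaf Leaf Leaf)) Leaf) Leaf (Node 7 Leaf Leaf (Node 9 Leaf Leaf Leaf (Node 18 Leaf Leaf Leaf Leaf)) (Node 9 Leaf Leaf Leaf (Node 18 Leaf Leaf Leaf Leaf)))) Leaf)) Leaf (Node 28 Leaf (Node 27 (Node 29 (Node 20 Leaf Leaf Leaf Leaf) Leaf Leaf Leaf) Leaf (Node 29 (Node 20 Leaf Leaf Leaf Leaf) Leaf Leaf Leaf) Leaf) Leaf (Node 29 (Node 20 Leaf Leaf Leaf Leaf) Leaf Leaf Leaf)) Leaf) Leaf (Node 36 Leaf (Node 27 (Node 28 Leaf (Node 29 Leaf Leaf Leaf (Node 31 Leaf (Node 4 Leaf (Node 7 (Node 6 Leaf Leaf Leaf (Node 18 Leaf Leaf Leaf Leaf)) Leaf Leaf Leaf) Leaf Leaf) Leaf (Node 4 Leaf (Node 7 (Node 6 Leaf (Node 8 Leaf Leaf Leaf Leaf) Leaf Leaf) Leaf Leaf Leaf) Leaf Leaf))) Leaf (Node 29 Leaf (Node 30 (Node 18 Leaf Leaf Leaf Leaf) Leaf (Node 40 Leaf Leaf (Node 7 (Node 8 Leaf Leaf Leaf Leaf) Leaf Leaf Leaf) Leaf) Leaf) Leaf Leaf)) Leaf (Node 40 (Node 5 (Node 21 Leaf (Node 39 Leaf Leaf Leaf Leaf) Leaf (Node 7 (Node 18 Leaf Leaf Leaf Leaf) Leaf Leaf Leaf)) Leaf (Node 30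 (Node 29 Leaf (Node 18 Leaf Leaf Leaf Leaf) Leaf (Node 18 Leaf Leaf Leaf Leaf)) Leaf Leaf Leaf) Leaf) Leaf (Node 4 Leaf (Node 29 Leaf Leaf Leaf (Node 7 (Node 18 Leaf Leaf Leaf Leaf) Leaf Leaf Leaf)) Leaf (Node 29 Leaf (Node 30 (Node 18 Leaf Leaf Leaf Leaf) Leaf (Node 7 (Node 18 Leaf Leaf Leaf Leaf) Leaf Leaf Leaf) Leaf) Leaf Leaf)) Leaf) Leaf) Leaf (Node 20 (Node 21 Leaf (Node 29 Leaf (Node 28 Leaf Leaf Leaf Leaf) Leaf (Node 28 (Node 38 Leaf Leaf Leaf Leaf) (Node 19 Leaf Leaf Leaf (Node 7 Leaf Leaf Leaf (Node 9 Leaf Leaf Leaf Leaf))) Leaf Leaf)) Leaf (Node 29 Leaf (Node 28 Leaf Leaf Leaf Leaf) Leaf (Node 28 Leaf (Node 19 Leaf Leaf Leaf (Node 7 Leaf Leaf Leaf (Node 9 Leaf Leaf Leaf Leaf))) Leaf Leaf))) Leaf (Node 4 Leaf (Node 7 (Node 8 Leaf Leaf (Node 13 Leaf Leaf (Node 14 Leaf (Node 18 Leaf Leaf Leaf Leaf) Leaf (Node 19 Leaf Leaf Leaf Leaf)) Leaf) (Node 18 Leaf Leaf Leaf Leaf)) Leaf Leaf (Node 8 Leaf Leaf (Node 10 (Node 19 Leaf Leaf Leaf (Node 18 Leaf Leaf Leaf Leaf)) Leaf (Node 6 (Node 30 Leaf Leaf Leaf Leaf) (Node 12 Leaf Leaf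 Leaf Leaf) Leaf Leaf) Leaf) Leaf)) Leaf (Node 7 (Node 8 Leaf (Node 18 (Node 19 Leaf Leaf Leaf Leaf) Leaf Leaf Leaf) (Node 13 Leaf Leaf (Node 14 Leaf (Node 18 Leaf Leaf Leaf Leaf) Leaf (Node 19 Leaf Leaf Leaf (Node 28 Leaf Leaf Leaf Leaf))) Leaf) Leaf) Leaf Leaf (Node 9 Leaf Leaf Leaf (Node 18 Leaf Leaf Leaf Leaf)))) Leaf)) Leaf))) (Node 26 (Node 41 (Node 32 Leaf Leaf (Node 36 Leaf (Node 27 Leaf Leaf (Node 40 Leaf Leaf (Node 4 Leaf (Node 29 (Node 7 Leaf Leaf Leaf (Node 18 Leaf Leaf Leaf Leaf)) Leaf Leaf Leaf) Leaf Leaf) (Node 4 Leaf (Node 29 Leaf Leaf Leaf Leaf) (Node 29 Leaf Leaf Leaf Leaf) Leaf)) (Node 28 (Node 29 Leaf (Node 30 Leaf Leaf Leaf Leaf) Leaf Leaf) (Node 29 (Node 31 (Node 5 Leaf Leaf Leaf (Node 18 Leaf Leaf Leaf Leaf)) (Node 5 Leaf Leaf Leaf (Node 18 Leaf Leaf Leaf Leaf)) Leaf Leaf) Leaf Leaf Leaf) Leaf Leaf)) Leaf (Node 20 (Node 27 Leaf (Node 19 Leaf (Node 29 Leaf Leaf Leaf Leaf) Leaf Leaf) (Node 29 Leaf Leaf Leaf Leaf) Leaf) Leaf Leaf Leaf)) (Node 36 Leaf (Node 27 Leaf Leaf (Node 28 (Node 29 Leaf (Node 30 Leaf Leaf Leaf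 Leaf) Leaf Leaf) (Node 29 (Node 31 (Node 5 Leaf Leaf Leaf (Node 18 Leaf Leaf Leaf Leaf)) (Node 5 Leaf Leaf Leaf (Node 18 Leaf Leaf Leaf Leaf)) Leaf Leaf) Leaf Leaf Leaf) Leaf Leaf) (Node 40 Leaf Leaf (Node 4 Leaf (Node 29 (Node 7 Leaf Leaf (Node 18 Leaf Leaf Leaf Leaf) Leaf) Leaf Leaf Leaf) Leaf Leaf) (Node 4 Leaf (Node 29 Leaf Leaf Leaf Leaf) (Node 29 Leaf Leaf Leaf Leaf) Leaf))) (Node 20 (Node 27 Leaf Leaf Leaf (Node 29 Leaf Leaf (Node 30 Leaf Leaf Leaf Leaf) Leaf)) Leaf Leaf Leaf) Leaf)) Leaf (Node 32 (Node 37 (Node 21 Leaf (Node 30 Leaf Leaf Leaf (Node 31 Leaf Leaf Leaf Leaf)) Leaf Leaf) Leaf Leaf (Node 28 Leaf (Node 27 Leaf Leaf (Node 29 Leaf Leaf Leaf Leaf) (Node 29 (Node 20 Leaf Leaf Leaf Leaf) Leaf Leaf Leaf)) (Node 27 Leaf Leaf Leaf (Node 29 (Node 20 Leaf Leaf Leaf Leaf) Leaf Leaf Leaf)) Leaf)) Leaf Leaf (Node 36 Leaf (Node 27 Leaf Leaf (Node 28 (Node 29 Leaf (Node 30 Leaf Leaf Leaf Leaf) (Node 30 Leaf Leaf Leaf Leaf) Leaf) (Node 29 Leaf Leaf (Node 30 Leaf Leaf Leaf (Node 40 Leaf Leaf Leaf (Node 7 Leaf Leaf (Node 6 Leaf Leaf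 Leaf Leaf) Leaf))) Leaf) Leaf Leaf) (Node 40 (Node 5 (Node 21 Leaf (Node 7 Leaf Leaf (Node 18 Leaf Leaf Leaf Leaf) Leaf) Leaf Leaf) Leaf Leaf (Node 30 Leaf Leaf Leaf Leaf)) Leaf Leaf (Node 4 Leaf (Node 29 (Node 18 Leaf Leaf Leaf Leaf) Leaf (Node 30 Leaf Leaf Leaf (Node 7 Leaf Leaf Leaf Leaf)) Leaf) (Node 29 Leaf (Node 30 Leaf Leaf Leaf (Node 7 Leaf Leaf Leaf Leaf)) Leaf Leaf) Leaf))) (Node 20 (Node 21 Leaf (Node 27 Leaf Leaf Leaf (Node 29 Leaf Leaf Leaf Leaf)) Leaf Leaf) Leaf Leaf (Node 27 Leaf (Node 19 Leaf Leaf Leaf Leaf) Leaf (Node 4 Leaf (Node 7 (Node 8 Leaf Leaf Leaf Leaf) Leaf Leaf Leaf) (Node 7 (Node 8 Leaf Leaf Leaf (Node 18 (Node 19 Leaf Leaf Leaf Leaf) Leaf Leaf Leaf)) Leaf Leaf Leaf) Leaf))) Leaf)) Leaf) Leaf (Node 41 (Node 32 Leaf Leaf (Node 36 Leaf (Node 27 (Node 28 Leaf (Node 29 (Node 30 Leaf Leaf Leaf Leaf) Leaf Leaf Leaf) Leaf Leaf) Leaf Leaf (Node 28 (Node 29 Leaf (Node 30 Leaf Leaf Leaf Leaf) Leaf Leaf) (Node 29 (Node 30 Leaf Leaf Leaf Leaf) Leaf Leaf Leaf) Leaf Leaf)) Leaf (Node 20 (Node 27 Leaf (Node 29 Leaf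 Leaf Leaf Leaf) Leaf Leaf) Leaf Leaf Leaf)) (Node 36 Leaf (Node 27 (Node 28 Leaf (Node 29 (Node 30 Leaf Leaf Leaf Leaf) Leaf Leaf Leaf) (Node 29 (Node 30 Leaf Leaf Leaf Leaf) (Node 30 Leaf Leaf Leaf Leaf) Leaf Leaf) Leaf) Leaf Leaf (Node 40 Leaf Leaf (Node 4 Leaf (Node 29 (Node 30 Leaf Leaf Leaf Leaf) Leaf Leaf Leaf) Leaf Leaf) (Node 4 Leaf (Node 29 Leaf Leaf Leaf Leaf) (Node 29 Leaf Leaf Leaf Leaf) Leaf))) (Node 20 (Node 29 Leaf Leaf (Node 38 Leaf Leaf Leaf Leaf) Leaf) Leaf Leaf Leaf) Leaf)) Leaf (Node 32 (Node 37 (Node 21 Leaf (Node 30 (Node 29 Leaf Leaf Leaf Leaf) Leaf Leaf (Node 31 Leaf (Node 27 (Node 40 (Node 18 Leaf Leaf Leaf Leaf) Leaf Leaf (Node 6 Leaf Leaf (Node 18 Leaf Leaf Leaf Leaf) Leaf)) Leaf Leaf (Node 40 (Node 18 Leaf Leaf Leaf Leaf) Leaf Leaf (Node 6 Leaf Leaf (Node 18 Leaf Leaf Leaf Leaf) Leaf))) (Node 6 Leaf (Node 39 Leaf Leaf Leaf Leaf) Leaf (Node 8 (Node 18 Leaf Leaf Leaf Leaf) Leaf Leaf Leaf)) Leaf)) (Node 20 (Node 29 Leaf Leaf (Node 19 Leaf Leaf (Node 27 (Node 18 Leaf Leaf Leaf Leaf) Leaf Leaf Leaf) Leaf) Leaf)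 Leaf Leaf (Node 4 Leaf (Node 40 (Node 7 Leaf Leaf Leaf (Node 9 Leaf Leaf Leaf Leaf)) Leaf Leaf (Node 31 Leaf (Node 27 (Node 7 Leaf Leaf Leaf (Node 6 Leaf Leaf (Node 18 Leaf Leaf Leaf Leaf) Leaf)) Leaf Leaf (Node 7 Leaf Leaf Leaf (Node 6 Leaf Leaf Leaf Leaf))) (Node 19 Leaf Leaf Leaf Leaf) Leaf)) (Node 7 Leaf Leaf (Node 9 Leaf Leaf (Node 18 Leaf Leaf Leaf Leaf) Leaf) (Node 9 Leaf Leaf (Node 18 Leaf Leaf Leaf Leaf) Leaf)) Leaf)) Leaf) Leaf Leaf (Node 28 Leaf (Node 27 (Node 29 (Node 20 Leaf Leaf Leaf Leaf) Leaf Leaf Leaf) Leaf Leaf (Node 29 (Node 20 Leaf Leaf Leaf Leaf) Leaf Leaf Leaf)) (Node 29 (Node 20 Leaf Leaf Leaf Leaf) Leaf Leaf Leaf) Leaf)) Leaf Leaf (Node 36 Leaf (Node 27 (Node 28 Leaf (Node 29 Leaf Leaf (Node 31 Leaf (Node 4 Leaf (Node 7 (Node 6 Leaf Leaf (Node 18 Leaf Leaf Leaf Leaf) Leaf) Leaf Leaf Leaf) Leaf Leaf) (Node 4 Leaf (Node 7 (Node 6 Leaf (Node 8 Leaf Leaf Leaf Leaf) Leaf Leaf) Leaf Leaf Leaf) Leaf Leaf) Leaf) Leaf) (Node 29 Leaf (Node 30 (Node 18 Leaf Leaf Leaf Leaf) Leaf Leaf (Node 40 Leaf Leaf Leaf (Node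 7 (Node 8 Leaf Leaf Leaf Leaf) Leaf Leaf Leaf))) Leaf Leaf) Leaf) Leaf Leaf (Node 40 (Node 5 (Node 21 Leaf (Node 39 Leaf Leaf Leaf Leaf) (Node 7 (Node 18 Leaf Leaf Leaf Leaf) Leaf Leaf Leaf) Leaf) Leaf Leaf (Node 30 (Node 29 Leaf (Node 18 Leaf Leaf Leaf Leaf) (Node 18 Leaf Leaf Leaf Leaf) Leaf) Leaf Leaf Leaf)) Leaf Leaf (Node 4 Leaf (Node 29 Leaf Leaf (Node 7 (Node 18 Leaf Leaf Leaf Leaf) Leaf Leaf Leaf) Leaf) (Node 29 Leaf (Node 30 (Node 18 Leaf Leaf Leaf Leaf) Leaf Leaf (Node 7 (Node 18 Leaf Leaf Leaf Leaf) Leaf Leaf Leaf)) Leaf Leaf) Leaf))) (Node 20 (Node 21 Leaf (Node 29 Leaf (Node 28 Leaf Leaf Leaf Leaf) (Node 28 (Node 38 Leaf Leaf Leaf Leaf) (Node 19 Leaf Leaf (Node 7 Leaf Leaf (Node 9 Leaf Leaf Leaf Leaf) Leaf) Leaf) Leaf Leaf) Leaf) (Node 29 Leaf (Node 28 Leaf Leaf Leaf Leaf) (Node 28 Leaf (Node 19 Leaf Leaf (Node 7 Leaf Leaf (Node 9 Leaf Leaf Leaf Leaf) Leaf) Leaf) Leaf Leaf) Leaf) Leaf) Leaf Leaf (Node 4 Leaf (Node 7 (Node 8 Leaf Leaf (Node 18 Leaf Leaf Leaf Leaf) (Node 13 Leaf Leaf Leaf (Node 14 Leaf (Node 18 Leaf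 Leaf Leaf Leaf) (Node 19 Leaf Leaf Leaf Leaf) Leaf))) Leaf (Node 8 Leaf Leaf Leaf (Node 10 (Node 19 Leaf Leaf (Node 18 Leaf Leaf Leaf Leaf) Leaf) Leaf Leaf (Node 6 (Node 30 Leaf Leaf Leaf Leaf) (Node 12 Leaf Leaf Leaf Leaf) Leaf Leaf))) Leaf) (Node 7 (Node 8 Leaf (Node 18 (Node 19 Leaf Leaf Leaf Leaf) Leaf Leaf Leaf) Leaf (Node 13 Leaf Leaf Leaf (Node 14 Leaf (Node 18 Leaf Leaf Leaf Leaf) (Node 19 Leaf Leaf (Node 28 Leaf Leaf Leaf Leaf) Leaf) Leaf))) Leaf (Node 9 Leaf Leaf (Node 18 Leaf Leaf Leaf Leaf) Leaf) Leaf) Leaf)) Leaf)) Leaf) Leaf)) (Node 17 (Node 25 Leaf (Node 21 Leaf Leaf (Node 37 (Node 30 Leaf (Node 32 (Node 31 Leaf Leaf (Node 40 (Node 39 Leaf Leaf Leaf Leaf) (Node 6 Leaf Leaf Leaf (Node 11 Leaf Leaf (Node 18 Leaf Leaf Leaf Leaf) (Node 13 Leaf Leaf Leaf Leaf))) Leaf Leaf) (Node 6 Leaf Leaf (Node 38 Leaf Leaf Leaf Leaf) Leaf)) (Node 28 Leaf Leaf (Node 7 (Node 10 (Node 19 Leaf (Node 18 Leaf Leaf Leaf Leaf) Leaf Leaf) Leaf Leaf Leaf) Leaf Leaf (Node 6 Leaf Leaf (Node 38 Leaf Leaf Leaf Leaf) Leaf)) (Node 7 (Node 19 Leaf (Node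 18 Leaf Leaf Leaf Leaf) Leaf Leaf) Leaf Leaf Leaf)) Leaf Leaf) Leaf Leaf) Leaf Leaf (Node 18 Leaf (Node 30 Leaf (Node 19 (Node 28 Leaf Leaf Leaf Leaf) Leaf (Node 27 Leaf Leaf Leaf (Node 31 Leaf Leaf (Node 39 Leaf Leaf Leaf Leaf) Leaf)) Leaf) Leaf Leaf) Leaf (Node 38 Leaf Leaf Leaf Leaf))) (Node 20 (Node 29 Leaf Leaf (Node 30 Leaf (Node 37 Leaf Leaf (Node 9 Leaf Leaf Leaf Leaf) Leaf) Leaf Leaf) (Node 37 Leaf Leaf (Node 28 Leaf Leaf Leaf Leaf) Leaf)) (Node 36 Leaf Leaf (Node 28 Leaf Leaf Leaf Leaf) (Node 32 (Node 4 Leaf Leaf (Node 30 Leaf (Node 31 Leaf Leaf (Node 27 Leaf Leaf Leaf Leaf) (Node 6 Leaf Leaf (Node 8 Leaf Leaf Leaf Leaf) Leaf)) (Node 31 Leaf Leaf Leaf (Node 6 Leaf Leaf Leaf Leaf)) Leaf) (Node 7 Leaf Leaf Leaf (Node 9 Leaf Leaf Leaf (Node 18 Leaf (Node 27 Leaf Leaf Leaf Leaf) Leaf Leaf)))) (Node 4 Leaf Leaf (Node 30 Leaf (Node 7 (Node 27 Leaf (Node 18 Leaf Leaf Leaf Leaf) Leaf Leaf) Leaf Leaf Leaf) (Node 31 Leaf Leaf Leaf (Node 6 Leaf Leaf Leaf Leaf)) Leaf) (Node 7 (Node 27 Leaf (Node 18 Leaf Leaf (Node 30 Leaf Leaf Leaf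 Leaf) Leaf) Leaf Leaf) Leaf Leaf (Node 9 Leaf Leaf Leaf (Node 18 Leaf (Node 27 Leaf Leaf Leaf Leaf) Leaf Leaf)))) Leaf Leaf)) Leaf Leaf)) Leaf (Node 21 Leaf (Node 20 (Node 29 Leaf (Node 41 (Node 32 Leaf (Node 7 (Node 9 Leaf Leaf Leaf Leaf) Leaf Leaf (Node 8 Leaf Leaf Leaf Leaf)) Leaf Leaf) Leaf Leaf Leaf) (Node 41 (Node 32 Leaf Leaf Leaf Leaf) Leaf Leaf Leaf) Leaf) Leaf Leaf (Node 30 (Node 36 Leaf (Node 27 (Node 32 (Node 39 Leaf Leaf Leaf Leaf) Leaf Leaf (Node 28 Leaf Leaf Leaf Leaf)) Leaf Leaf (Node 18 Leaf Leaf Leaf Leaf)) (Node 41 Leaf (Node 39 Leaf (Node 38 Leaf Leaf Leaf Leaf) (Node 38 Leaf Leaf Leaf Leaf) Leaf) Leaf Leaf) Leaf) Leaf Leaf (Node 36 Leaf (Node 27 (Node 31 Leaf (Node 41 Leaf (Node 4 Leaf (Node 28 Leaf (Node 19 Leaf Leaf Leaf Leaf) Leaf Leaf) (Node 28 Leaf Leaf (Node 19 Leaf Leaf Leaf Leaf) Leaf) Leaf) Leaf Leaf) (Node 40 (Node 39 Leaf Leaf Leaf Leaf) Leaf Leaf (Node 6 Leaf (Node 19 Leaf Leaf Leaf Leaf) Leaf Leaf)) Leaf) Leaf Leaf (Node 18 Leaf Leaf Leaf Leaf)) (Node 41 Leaf (Node 19 Leaf (Node 18 Leaf Leaf Leaf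 (Node 39 Leaf Leaf Leaf Leaf)) (Node 18 Leaf Leaf Leaf (Node 39 Leaf Leaf Leaf Leaf)) Leaf) Leaf Leaf) Leaf))) (Node 37 (Node 32 (Node 38 Leaf (Node 29 (Node 31 Leaf Leaf (Node 39 Leaf Leaf Leaf Leaf) Leaf) Leaf Leaf Leaf) (Node 29 (Node 31 Leaf Leaf (Node 39 Leaf Leaf Leaf Leaf) Leaf) Leaf Leaf Leaf) Leaf) Leaf Leaf (Node 28 Leaf (Node 27 (Node 29 (Node 6 Leaf (Node 19 Leaf Leaf Leaf Leaf) (Node 19 Leaf Leaf Leaf Leaf) Leaf) Leaf Leaf Leaf) Leaf Leaf (Node 18 Leaf Leaf Leaf Leaf)) (Node 29 (Node 6 Leaf (Node 14 Leaf Leaf Leaf Leaf) (Node 19 Leaf (Node 39 Leaf Leaf Leaf Leaf) Leaf Leaf) Leaf) Leaf Leaf Leaf) Leaf)) Leaf Leaf (Node 36 Leaf (Node 27 (Node 28 Leaf (Node 19 Leaf Leaf Leaf Leaf) (Node 29 Leaf Leaf Leaf Leaf) Leaf) Leaf Leaf (Node 18 Leaf Leaf (Node 8 Leaf Leaf Leaf Leaf) Leaf)) (Node 5 (Node 40 (Node 6 Leaf (Node 7 (Node 14 Leaf Leaf Leaf Leaf) Leaf Leaf (Node 28 Leaf Leaf Leaf Leaf)) (Node 31 Leaf (Node 39 Leaf (Node 18 Leaf Leaf Leaf Leaf) (Node 18 Leaf Leaf Leaf Leaf) Leaf) Leaf Leaf) Leaf) Leaf Leaf (Node 6 Leaf (Node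 7 (Node 23 Leaf Leaf Leaf Leaf) Leaf Leaf (Node 23 Leaf Leaf Leaf Leaf)) (Node 31 Leaf (Node 11 Leaf (Node 28 Leaf Leaf Leaf Leaf) Leaf Leaf) Leaf Leaf) Leaf)) Leaf Leaf (Node 4 Leaf (Node 28 Leaf (Node 40 Leaf Leaf Leaf Leaf) Leaf Leaf) (Node 28 Leaf Leaf (Node 8 Leaf Leaf Leaf Leaf) Leaf) Leaf)) Leaf)) Leaf)) Leaf Leaf (Node 25 Leaf (Node 21 (Node 20 Leaf (Node 36 Leaf Leaf Leaf (Node 32 (Node 28 Leaf (Node 30 Leaf (Node 31 Leaf Leaf Leaf (Node 39 Leaf Leaf Leaf Leaf)) Leaf (Node 31 Leaf (Node 39 Leaf Leaf Leaf Leaf) Leaf Leaf)) Leaf (Node 19 Leaf Leaf Leaf Leaf)) (Node 28 (Node 19 Leaf Leaf Leaf Leaf) Leaf Leaf Leaf) Leaf Leaf)) Leaf (Node 29 (Node 36 Leaf (Node 32 (Node 27 Leaf Leaf Leaf Leaf) Leaf Leaf (Node 28 Leaf Leaf Leaf Leaf)) Leaf Leaf) Leaf (Node 30 Leaf (Node 36 Leaf (Node 27 Leaf Leaf Leaf Leaf) Leaf Leaf) Leaf (Node 36 Leaf (Node 27 Leaf Leaf Leaf Leaf) Leaf Leaf)) Leaf)) Leaf (Node 37 (Node 30 Leaf (Node 32 (Node 31 Leaf Leaf (Node 40 (Node 39 Leaf Leaf Leaf Leaf) (Node 6 Leaf (Node 27 Leaf Leaf Leaf Leaf) Leaf Leaf)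 Leaf Leaf) (Node 6 Leaf (Node 18 Leaf Leaf Leaf Leaf) Leaf Leaf)) Leaf Leaf Leaf) Leaf (Node 29 (Node 32 (Node 31 Leaf (Node 40 Leaf Leaf (Node 39 Leaf Leaf Leaf Leaf) Leaf) (Node 40 Leaf (Node 27 Leaf Leaf Leaf Leaf) Leaf Leaf) Leaf) Leaf Leaf Leaf) Leaf (Node 31 Leaf (Node 38 Leaf Leaf Leaf Leaf) (Node 38 Leaf Leaf Leaf (Node 19 Leaf Leaf Leaf Leaf)) Leaf) Leaf)) Leaf Leaf (Node 18 Leaf (Node 30 Leaf (Node 19 (Node 28 Leaf Leaf (Node 27 Leaf Leaf Leaf (Node 31 (Node 4 Leaf Leaf (Node 24 Leaf Leaf Leaf Leaf) Leaf) Leaf Leaf Leaf)) Leaf) Leaf (Node 28 Leaf Leaf Leaf Leaf) Leaf) Leaf Leaf) Leaf Leaf)) Leaf) Leaf (Node 41 (Node 32 Leaf (Node 36 Leaf Leaf (Node 28 (Node 27 Leaf (Node 18 Leaf Leaf Leaf Leaf) Leaf Leaf) Leaf (Node 29 Leaf Leaf Leaf Leaf) Leaf) Leaf) Leaf (Node 36 Leaf (Node 20 (Node 29 Leaf (Node 28 (Node 27 Leaf Leaf Leaf (Node 38 Leaf Leaf Leaf Leaf)) Leaf Leaf Leaf) Leaf Leaf) Leaf Leaf (Node 19 (Node 27 Leaf Leaf Leaf Leaf) (Node 27 Leaf Leaf Leaf Leaf) Leaf Leaf)) (Node 40 Leaf Leaf Leaf (Node 4 Leaf Leaf Leaf Leaf))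 Leaf)) (Node 32 (Node 7 Leaf (Node 8 (Node 12 Leaf (Node 28 Leaf Leaf (Node 19 Leaf Leaf Leaf Leaf) (Node 13 (Node 21 Leaf Leaf (Node 18 (Node 31 Leaf Leaf Leaf Leaf) Leaf Leaf Leaf) Leaf) Leaf (Node 18 Leaf Leaf (Node 19 (Node 20 Leaf Leaf Leaf Leaf) Leaf Leaf Leaf) Leaf) Leaf)) Leaf (Node 28 Leaf (Node 19 Leaf Leaf (Node 18 Leaf Leaf Leaf Leaf) Leaf) Leaf Leaf)) Leaf (Node 18 (Node 20 Leaf Leaf Leaf (Node 19 Leaf Leaf (Node 11 (Node 6 Leaf Leaf Leaf Leaf) Leaf Leaf Leaf) Leaf)) Leaf Leaf Leaf) Leaf) Leaf (Node 9 Leaf (Node 18 (Node 27 Leaf Leaf Leaf Leaf) Leaf (Node 27 Leaf Leaf Leaf (Node 28 Leaf (Node 29 (Node 20 Leaf Leaf Leaf Leaf) Leaf (Node 30 Leaf Leaf Leaf Leaf) Leaf) (Node 29 Leaf Leaf Leaf Leaf) Leaf)) Leaf) (Node 18 (Node 29 Leaf (Node 20 Leaf Leaf Leaf (Node 19 Leaf Leaf Leaf Leaf)) Leaf Leaf) (Node 30 Leaf Leaf Leaf Leaf) Leaf Leaf) Leaf)) Leaf Leaf (Node 36 Leaf (Node 20 (Node 29 Leaf (Node 28 (Node 27 Leaf Leaf Leaf (Node 38 Leaf Leaf Leaf Leaf)) Leaf (Node 19 Leaf (Node 18 Leaf Leaf Leaf Leaf) Leaf (Node 27 Leaf Leaf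 Leaf Leaf)) Leaf) (Node 28 (Node 27 Leaf Leaf Leaf (Node 38 Leaf Leaf Leaf Leaf)) Leaf Leaf Leaf) Leaf) Leaf Leaf (Node 4 Leaf (Node 7 (Node 18 Leaf Leaf Leaf Leaf) (Node 9 Leaf (Node 18 Leaf Leaf Leaf Leaf) Leaf Leaf) Leaf Leaf) (Node 7 (Node 18 Leaf Leaf Leaf Leaf) (Node 19 Leaf Leaf Leaf Leaf) Leaf Leaf) Leaf)) (Node 40 (Node 31 Leaf (Node 27 (Node 28 Leaf Leaf Leaf Leaf) Leaf Leaf (Node 6 Leaf Leaf (Node 30 (Node 29 Leaf Leaf Leaf Leaf) Leaf Leaf (Node 19 Leaf Leaf Leaf Leaf)) Leaf)) (Node 7 (Node 6 Leaf (Node 8 Leaf Leaf Leaf Leaf) Leaf Leaf) (Node 6 (Node 30 Leaf Leaf Leaf (Node 18 Leaf Leaf Leaf Leaf)) Leaf Leaf Leaf) Leaf Leaf) Leaf) Leaf Leaf (Node 4 Leaf (Node 29 Leaf Leaf (Node 28 Leaf Leaf Leaf Leaf) Leaf) (Node 29 Leaf (Node 28 Leaf Leaf (Node 38 Leaf Leaf Leaf Leaf) Leaf) Leaf Leaf) Leaf)) Leaf)) Leaf Leaf))) (Node 17 (Node 25 Leaf (Node 21 Leaf Leaf (Node 20 (Node 29 Leaf Leaf (Node 37 Leaf Leaf Leaf (Node 28 Leaf Leaf Leaf Leaf)) (Node 30 Leaf (Node 37 Leaf Leaf Leaf (Node 9 Leaf Leaf Leaf Leaf)) Leaf Leaf))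 (Node 36 Leaf Leaf (Node 32 (Node 4 Leaf Leaf (Node 7 Leaf Leaf (Node 9 Leaf Leaf (Node 18 Leaf (Node 27 Leaf Leaf Leaf Leaf) Leaf Leaf) Leaf) Leaf) (Node 30 Leaf (Node 31 Leaf Leaf (Node 6 Leaf Leaf Leaf (Node 8 Leaf Leaf Leaf Leaf)) (Node 27 Leaf Leaf Leaf Leaf)) Leaf (Node 31 Leaf Leaf (Node 6 Leaf Leaf Leaf Leaf) Leaf))) (Node 4 Leaf Leaf (Node 7 (Node 27 Leaf (Node 18 Leaf Leaf Leaf (Node 30 Leaf Leaf Leaf Leaf)) Leaf Leaf) Leaf (Node 9 Leaf Leaf (Node 18 Leaf (Node 27 Leaf Leaf Leaf Leaf) Leaf Leaf) Leaf) Leaf) (Node 30 Leaf (Node 7 (Node 27 Leaf (Node 18 Leaf Leaf Leaf Leaf) Leaf Leaf) Leaf Leaf Leaf) Leaf (Node 31 Leaf Leaf (Node 6 Leaf Leaf Leaf Leaf) Leaf))) Leaf Leaf) (Node 28 Leaf Leaf Leaf Leaf)) Leaf Leaf) (Node 37 (Node 30 Leaf (Node 32 (Node 31 Leaf Leaf (Node 6 Leaf Leaf Leaf (Node 38 Leaf Leaf Leaf Leaf)) (Node 40 (Node 39 Leaf Leaf Leaf Leaf) (Node 6 Leaf Leaf (Node 11 Leaf Leaf (Node 13 Leaf Leaf Leaf Leaf) (Node 18 Leaf Leaf Leaf Leaf)) Leaf) Leaf Leaf)) (Node 28 Leaf Leaf (Node 7 (Node 19 Leaf (Node 18 Leaf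 Leaf Leaf Leaf) Leaf Leaf) Leaf Leaf Leaf) (Node 7 (Node 10 (Node 19 Leaf (Node 18 Leaf Leaf Leaf Leaf) Leaf Leaf) Leaf Leaf Leaf) Leaf (Node 6 Leaf Leaf Leaf (Node 38 Leaf Leaf Leaf Leaf)) Leaf)) Leaf Leaf) Leaf Leaf) Leaf (Node 18 Leaf (Node 30 Leaf (Node 19 (Node 28 Leaf Leaf Leaf Leaf) Leaf Leaf (Node 27 Leaf Leaf (Node 31 Leaf Leaf Leaf (Node 39 Leaf Leaf Leaf Leaf)) Leaf)) Leaf Leaf) (Node 38 Leaf Leaf Leaf Leaf) Leaf) Leaf)) (Node 21 Leaf (Node 20 (Node 29 Leaf (Node 41 (Node 32 Leaf (Node 7 (Node 9 Leaf Leaf Leaf Leaf) Leaf (Node 8 Leaf Leaf Leaf Leaf) Leaf) Leaf Leaf) Leaf Leaf Leaf) Leaf (Node 41 (Node 32 Leaf Leaf Leaf Leaf) Leaf Leaf Leaf)) Leaf (Node 30 (Node 36 Leaf (Node 27 (Node 32 (Node 39 Leaf Leaf Leaf Leaf) Leaf (Node 28 Leaf Leaf Leaf Leaf) Leaf) Leaf (Node 18 Leaf Leaf Leaf Leaf) Leaf) Leaf (Node 41 Leaf (Node 39 Leaf (Node 38 Leaf Leaf Leaf Leaf) Leaf (Node 38 Leaf Leaf Leaf Leaf)) Leaf Leaf)) Leaf (Node 36 Leaf (Node 27 (Node 31 Leaf (Node 41 Leaf (Node 4 Leaf (Node 28 Leaf (Node 19 Leaf Leaf Leaf Leaf) Leaf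 Leaf) Leaf (Node 28 Leaf Leaf Leaf (Node 19 Leaf Leaf Leaf Leaf))) Leaf Leaf) Leaf (Node 40 (Node 39 Leaf Leaf Leaf Leaf) Leaf (Node 6 Leaf (Node 19 Leaf Leaf Leaf Leaf) Leaf Leaf) Leaf)) Leaf (Node 18 Leaf Leaf Leaf Leaf) Leaf) Leaf (Node 41 Leaf (Node 19 Leaf (Node 18 Leaf Leaf (Node 39 Leaf Leaf Leaf Leaf) Leaf) Leaf (Node 18 Leaf Leaf (Node 39 Leaf Leaf Leaf Leaf) Leaf)) Leaf Leaf)) Leaf) Leaf) Leaf (Node 37 (Node 32 (Node 38 Leaf (Node 29 (Node 31 Leaf Leaf Leaf (Node 39 Leaf Leaf Leaf Leaf)) Leaf Leaf Leaf) Leaf (Node 29 (Node 31 Leaf Leaf Leaf (Node 39 Leaf Leaf Leaf Leaf)) Leaf Leaf Leaf)) Leaf (Node 28 Leaf (Node 27 (Node 29 (Node 6 Leaf (Node 19 Leaf Leaf Leaf Leaf) Leaf (Node 19 Leaf Leaf Leaf Leaf)) Leaf Leaf Leaf) Leaf (Node 18 Leaf Leaf Leaf Leaf) Leaf) Leaf (Node 29 (Node 6 Leaf (Node 14 Leaf Leaf Leaf Leaf) Leaf (Node 19 Leaf (Node 39 Leaf Leaf Leaf Leaf) Leaf Leaf)) Leaf Leaf Leaf)) Leaf) Leaf (Node 36 Leaf (Node 27 (Node 28 Leaf (Node 19 Leaf Leaf Leaf Leaf) Leaf (Node 29 Leaf Leaf Leaf Leaf)) Leaf (Node 18 Leaf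 Leaf Leaf (Node 8 Leaf Leaf Leaf Leaf)) Leaf) Leaf (Node 5 (Node 40 (Node 6 Leaf (Node 7 (Node 14 Leaf Leaf Leaf Leaf) Leaf (Node 28 Leaf Leaf Leaf Leaf) Leaf) Leaf (Node 31 Leaf (Node 39 Leaf (Node 18 Leaf Leaf Leaf Leaf) Leaf (Node 18 Leaf Leaf Leaf Leaf)) Leaf Leaf)) Leaf (Node 6 Leaf (Node 7 (Node 23 Leaf Leaf Leaf Leaf) Leaf (Node 23 Leaf Leaf Leaf Leaf) Leaf) Leaf (Node 31 Leaf (Node 11 Leaf (Node 28 Leaf Leaf Leaf Leaf) Leaf Leaf) Leaf Leaf)) Leaf) Leaf (Node 4 Leaf (Node 28 Leaf (Node 40 Leaf Leaf Leaf Leaf) Leaf Leaf) Leaf (Node 28 Leaf Leaf Leaf (Node 8 Leaf Leaf Leaf Leaf))) Leaf)) Leaf)) Leaf) Leaf (Node 25 Leaf (Node 21 (Node 20 Leaf (Node 36 Leaf Leaf (Node 32 (Node 28 Leaf (Node 30 Leaf (Node 31 Leaf Leaf (Node 39 Leaf Leaf Leaf Leaf) Leaf) (Node 31 Leaf (Node 39 Leaf Leaf Leaf Leaf) Leaf Leaf) Leaf) (Node 19 Leaf Leaf Leaf Leaf) Leaf) (Node 28 (Node 19 Leaf Leaf Leaf Leaf) Leaf Leaf Leaf) Leaf Leaf) Leaf) (Node 29 (Node 36 Leaf (Node 32 (Node 27 Leaf Leaf Leaf Leaf) Leaf (Node 28 Leaf Leaf Leaf Leaf) Leaf) Leaf Leaf)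 Leaf Leaf (Node 30 Leaf (Node 36 Leaf (Node 27 Leaf Leaf Leaf Leaf) Leaf Leaf) (Node 36 Leaf (Node 27 Leaf Leaf Leaf Leaf) Leaf Leaf) Leaf)) Leaf) Leaf Leaf (Node 37 (Node 30 Leaf (Node 32 (Node 31 Leaf Leaf (Node 6 Leaf (Node 18 Leaf Leaf Leaf Leaf) Leaf Leaf) (Node 40 (Node 39 Leaf Leaf Leaf Leaf) (Node 6 Leaf (Node 27 Leaf Leaf Leaf Leaf) Leaf Leaf) Leaf Leaf)) Leaf Leaf Leaf) (Node 29 (Node 32 (Node 31 Leaf (Node 40 Leaf Leaf Leaf (Node 39 Leaf Leaf Leaf Leaf)) Leaf (Node 40 Leaf (Node 27 Leaf Leaf Leaf Leaf) Leaf Leaf)) Leaf Leaf Leaf) Leaf Leaf (Node 31 Leaf (Node 38 Leaf Leaf Leaf Leaf) Leaf (Node 38 Leaf Leaf (Node 19 Leaf Leaf Leaf Leaf) Leaf))) Leaf) Leaf (Node 18 Leaf (Node 30 Leaf (Node 19 (Node 28 Leaf Leaf Leaf (Node 27 Leaf Leaf (Node 31 (Node 4 Leaf Leaf Leaf (Node 24 Leaf Leaf Leaf Leaf)) Leaf Leaf Leaf) Leaf)) Leaf Leaf (Node 28 Leaf Leaf Leaf Leaf)) Leaf Leaf) Leaf Leaf) Leaf)) (Node 41 (Node 32 Leaf (Node 36 Leaf Leaf Leaf (Node 28 (Node 27 Leaf (Node 18 Leaf Leaf Leaf Leaf) Leaf Leaf) Leaf Leaf (Node 29 Leaf Leaf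 Leaf Leaf))) (Node 36 Leaf (Node 20 (Node 29 Leaf (Node 28 (Node 27 Leaf Leaf (Node 38 Leaf Leaf Leaf Leaf) Leaf) Leaf Leaf Leaf) Leaf Leaf) Leaf (Node 19 (Node 27 Leaf Leaf Leaf Leaf) (Node 27 Leaf Leaf Leaf Leaf) Leaf Leaf) Leaf) Leaf (Node 40 Leaf Leaf (Node 4 Leaf Leaf Leaf Leaf) Leaf)) Leaf) (Node 32 (Node 7 Leaf (Node 8 (Node 12 Leaf (Node 28 Leaf Leaf (Node 13 (Node 21 Leaf Leaf Leaf (Node 18 (Node 31 Leaf Leaf Leaf Leaf) Leaf Leaf Leaf)) Leaf Leaf (Node 18 Leaf Leaf Leaf (Node 19 (Node 20 Leaf Leaf Leaf Leaf) Leaf Leaf Leaf))) (Node 19 Leaf Leaf Leaf Leaf)) (Node 28 Leaf (Node 19 Leaf Leaf Leaf (Node 18 Leaf Leaf Leaf Leaf)) Leaf Leaf) Leaf) Leaf Leaf (Node 18 (Node 20 Leaf Leaf (Node 19 Leaf Leaf Leaf (Node 11 (Node 6 Leaf Leaf Leaf Leaf) Leaf Leaf Leaf)) Leaf) Leaf Leaf Leaf)) (Node 9 Leaf (Node 18 (Node 27 Leaf Leaf Leaf Leaf) Leaf Leaf (Node 27 Leaf Leaf (Node 28 Leaf (Node 29 (Node 20 Leaf Leaf Leaf Leaf) Leaf Leaf (Node 30 Leaf Leaf Leaf Leaf)) Leaf (Node 29 Leaf Leaf Leaf Leaf)) Leaf)) Leaf (Node 18 (Node 29 Leaf (Node 20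 Leaf Leaf (Node 19 Leaf Leaf Leaf Leaf) Leaf) Leaf Leaf) (Node 30 Leaf Leaf Leaf Leaf) Leaf Leaf)) Leaf) Leaf (Node 36 Leaf (Node 20 (Node 29 Leaf (Node 28 (Node 27 Leaf Leaf (Node 38 Leaf Leaf Leaf Leaf) Leaf) Leaf Leaf (Node 19 Leaf (Node 18 Leaf Leaf Leaf Leaf) (Node 27 Leaf Leaf Leaf Leaf) Leaf)) Leaf (Node 28 (Node 27 Leaf Leaf (Node 38 Leaf Leaf Leaf Leaf) Leaf) Leaf Leaf Leaf)) Leaf (Node 4 Leaf (Node 7 (Node 18 Leaf Leaf Leaf Leaf) (Node 9 Leaf (Node 18 Leaf Leaf Leaf Leaf) Leaf Leaf) Leaf Leaf) Leaf (Node 7 (Node 18 Leaf Leaf Leaf Leaf) (Node 19 Leaf Leaf Leaf Leaf) Leaf Leaf)) Leaf) Leaf (Node 40 (Node 31 Leaf (Node 27 (Node 28 Leaf Leaf Leaf Leaf) Leaf (Node 6 Leaf Leaf Leaf (Node 30 (Node 29 Leaf Leaf Leaf Leaf) Leaf (Node 19 Leaf Leaf Leaf Leaf) Leaf)) Leaf) Leaf (Node 7 (Node 6 Leaf (Node 8 Leaf Leaf Leaf Leaf) Leaf Leaf) (Node 6 (Node 30 Leaf Leaf (Node 18 Leaf Leaf Leaf Leaf) Leaf) Leaf Leaf Leaf) Leaf Leaf)) Leaf (Node 4 Leaf (Node 29 Leaf Leaf Leaf (Node 28 Leaf Leaf Leaf Leaf)) Leaf (Node 29 Leaf (Node 28 Leaf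 Leaf Leaf (Node 38 Leaf Leaf Leaf Leaf)) Leaf Leaf)) Leaf)) Leaf) Leaf Leaf) Leaf) Leaf)).

Fixpoint psums (ks : seq nat) : seq nat :=
  match ks with [::] => [::] | k :: ks' => k :: map (addn k) (psums ks') end.

Lemma pickfE {T} (x0 : T) ks l : pickf x0 ks l = map (nth x0 l) (psums ks).
Proof.
elim: ks l => [|k ks IH] l //=.
rewrite IH -map_comp; congr (_ :: _).
  by rewrite -nth0 nth_drop addn0.
by apply: eq_map => j /=; rewrite nth_drop.
Qed.

Lemma size_pass_aux pre S D : size S = size D -> size (pass_aux pre S D) = size D.
Proof.
elim: D pre S => [|d D IH] pre [|s S] //= [] h.
by rewrite IH.
Qed.

Lemma nth_pass_aux pre S D j : size S = size D -> j < size D ->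
  nth dempty (pass_aux pre S D) j =
  foldl dremove (nth dempty D j)
    (pickf None gaps (rev (take j S) ++ pre) ++ pickf None fgaps (drop j S)).
Proof.
elim: D pre S j => [|d D IH] pre [|s S] j //= [] hs hj.
case: j hj => [|j] hj //=.
by rewrite IH // rev_cons cat_rcons.
Qed.

Lemma dget_remove d o c : c < 4 -> dget (dremove d o) c = dget d c && (o != Some c).
Proof.
case: d => a0 a1 a2 a3; case: o => [o|]; last by rewrite andbT.
by case: c => [|[|[|[|c]]]] // _; case: o => [|[|[|[|o]]]] /=; rewrite ?andbT ?andbF.
Qed.

Lemma foldl_dremove d fs c : c < 4 ->
  dget (foldl dremove d fs) c = dget d c && all (fun o => o != Some c) fs.
Proof.
move=> hc; elim: fs d => [|o fs IH] d /=; first by rewrite andbT.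
by rewrite IH dget_remove // andbA.
Qed.

Lemma dsingP d c x : dsing d = Some c -> x < 4 -> dget d x -> x = c.
Proof.
case: d => [] [] [] [] [] //= [<-]; by case: x => [|[|[|[|x]]]].
Qed.
Arguments dsingP {d c x}.

Lemma dget_single c x : c < 4 -> x < 4 -> dget (dsingle c) x = (x == c).
Proof. by case: c => [|[|[|[|c]]]] //; case: x => [|[|[|[|x]]]]. Qed.

Definition Inv (col : nat -> 'I_4) (D : seq dom) :=
  size D = 58 /\ forall j, j < 58 -> dget (nth dempty D j) (col j.+1).

Lemma sq_wit0 k : k \in [:: 0;3;8;15;24;35;48] -> exists x, 0 < x /\ k.+1 = x ^ 2.
Proof.
move=> hk.
have : all (fun j => has (fun x => (0 < x) && (j.+1 == x ^ 2)) (iota 0 8)) [:: 0;3;8;15;24;35;48] by [].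
move=> /allP /(_ _ hk) /hasP [x _ /andP [hx /eqP hx2]]; by exists x.
Qed.

Lemma sq_wit1 k : k \in [:: 1;4;9;16;25;36;49] -> exists x, 0 < x /\ k = x ^ 2.
Proof.
move=> hk.
have : all (fun j => has (fun x => (0 < x) && (j == x ^ 2)) (iota 0 8)) [:: 1;4;9;16;25;36;49] by [].
move=> /allP /(_ _ hk) /hasP [x _ /andP [hx /eqP hx2]]; by exists x.
Qed.

Lemma nomono col a b x : ~ mono_square_pair 4 58 col -> a < b -> b < 58 -> 0 < x ->
  b - a = x ^ 2 -> (col a.+1 : nat) <> col b.+1.
Proof.
move=> nm hab hb hx hd e; apply: nm; exists a.+1, b.+1, x; split => //;
  try (by rewrite subSS); try lia; exact: val_inj.
Qed.
Arguments nomono {col a b x}.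

Lemma pass_sound col D : ~ mono_square_pair 4 58 col -> Inv col D -> Inv col (pass D).
Proof.
move=> nm [hs hD]; split; first by rewrite /pass size_pass_aux // size_map.
move=> j hj; rewrite /pass nth_pass_aux ?size_map ?hs // cats0.
rewrite foldl_dremove ?ltn_ord // hD // andTb all_cat !pickfE.
apply/andP; split; apply/allP => o /mapP [k hk ->].
- have [x [hx hkx]] := sq_wit0 k hk.
  have hsz : size (take j (map dsing D)) = j by rewrite size_take size_map hs hj.
  case: (ltnP k j) => hkj; last by rewrite nth_default // size_rev hsz.
  rewrite nth_rev ?hsz // nth_take; last by lia.
  rewrite (nth_map dempty); last by rewrite hs; lia.
  apply/eqP => e.
  have hi : j - k.+1 < 58 by lia.
  have := dsingP e (ltn_ord _) (hD _ hi).
  apply: (nomono nm (x := x)) => //; lia.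
- have [x [hx hkx]] := sq_wit1 k hk.
  rewrite nth_drop.
  case: (ltnP (j + k) 58) => hjk; last by rewrite nth_default // size_map hs.
  rewrite (nth_map dempty); last by rewrite hs.
  apply/eqP => e.
  have := dsingP e (ltn_ord _) (hD _ hjk).
  move=> e2; apply: (nomono nm (a := j) (b := j + k) (x := x)) => //; lia.
Qed.
Arguments pass_sound {col D}.

Lemma prop_sound col D : ~ mono_square_pair 4 58 col -> Inv col D -> Inv col (prop D).
Proof.
move=> nm hD; rewrite /prop.
have : Inv col (pass D) by apply: pass_sound.
move: (pass D) => D'; clear hD; move: D.
elim: 29 D' => [|f IH] D' D hD' //=.
case: seqeqb => //; apply: IH; exact: pass_sound.
Qed.
Arguments prop_sound {col D}.

Lemma hasemp_inv col D : Inv col D -> hasemp D = false.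
Proof.
move=> [hs hD]; apply/negbTE/negP => he.
have : exists j, j < size D /\ demp (nth dempty D j).
  elim: (D) he => [|d D' IH] //= he.
  case hd: (demp d) in he *; first by exists 0.
  have [j [h1 h2]] := IH he; by exists j.+1.
move=> [j [hj hdj]].
move: (hD j); rewrite -hs => /(_ hj).
by case: (nth dempty D j) hdj => [] [] [] [] [] //= _; case: (nat_of_ord _) => [|[|[|]]].
Qed.
Arguments hasemp_inv {col D}.

Lemma chk_sound col t D : chk t D -> Inv col D -> ~ mono_square_pair 4 58 col -> False.
Proof.
elim: t D => [|v t0 IH0 t1 IH1 t2 IH2 t3 IH3] D /= H hD nm;
  have hD' := prop_sound nm hD; move: H; rewrite (hasemp_inv hD') //.
case: ltnP => hv //.
have hvc := proj2 hD' v hv.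
have hinv : forall c, c = (col v.+1 : nat) ->
    Inv col (set_nth dempty (prop D) v (dsingle c)).
  move=> c ->; split; first by rewrite size_set_nth (proj1 hD'); lia.
  move=> j hj; rewrite nth_set_nth /=; case: eqP => [->|_]; last exact: (proj2 hD').
  by rewrite dget_single ?ltn_ord.
case ec: (col v.+1 : nat) hvc hinv => [|[|[|[|c]]]] hvc hinv;
  rewrite ?hvc.
- by move: (fun h => IH0 _ h (hinv _ erefl) nm); case: (chk t0 _) => // /(_ isT).
- case: (if dget _ 0 then _ else _) => //.
  by move: (fun h => IH1 _ h (hinv _ erefl) nm); case: (chk t1 _) => // /(_ isT).
- case: (if dget _ 0 then _ else _) => //; case: (if dget _ 1 then _ else _) => //.
  by move: (fun h => IH2 _ h (hinv _ erefl) nm); case: (chk t2 _) => // /(_ isT).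
- case: (if dget _ 0 then _ else _) => //; case: (if dget _ 1 then _ else _) => //; case: (if dget _ 2 then _ else _) => //.
  by move: (fun h => IH3 _ h (hinv _ erefl) nm); case: (chk t3 _) => // /(_ isT).
- by move: (ltn_ord (col v.+1)); rewrite ec.
Qed.
Arguments chk_sound {col t D}.

Lemma big : chk T0 D0 = true.
Proof. vm_cast_no_check (erefl true). Qed.
Lemma mono_relabel (g : 'I_4 -> 'I_4) (ginj : injective g) n col :
  mono_square_pair 4 n (fun i => g (col i)) -> mono_square_pair 4 n col.
Proof.
move=> [a [b [x [h1 h2 h3 h4 h5]]]]; exists a, b, x; split => //.
exact: ginj.
Qed.

Lemma every58 : every_coloring_mono 4 58.
Proof.
move=> col.
case: (eqVneq (col 1) (col 2)) => [e|ne].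
  by exists 1, 2, 1; split.
pose o1 : 'I_4 := Ordinal (isT : 1 < 4).
pose p1 := tperm (col 1) ord0.
pose p2 := tperm (p1 (col 2)) o1.
apply: (@mono_relabel (fun x => p2 (p1 x))).
  by move=> x y /perm_inj /perm_inj.
have h1 : p1 (col 1) = ord0 by rewrite /p1 tpermL.
have h2 : p1 (col 2) != ord0.
  by rewrite -h1 (inj_eq perm_inj) eq_sym.
have e1 : (p2 (p1 (col 1)) : nat) = 0 by rewrite /p2 h1 tpermD.
have e2 : (p2 (p1 (col 2)) : nat) = 1 by rewrite /p2 tpermL.
case: (classic (mono_square_pair 4 58 (fun i => p2 (p1 (col i))))) => // nm.
exfalso; apply: (chk_sound big _ nm); split => // j hj.
case: j hj => [|[|j]] hj; first by rewrite /D0 /= e1.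
  by rewrite /D0 /= e2.
rewrite /D0 -[nth _ _ j.+2]/(nth dempty (nseq 56 (Dom true true true true)) j) nth_nseq.
case: ifP => h; last by lia.
by case: (X in dget _ X) => [|[|[|]]].
Qed.

Definition L57 := [:: 0; 1; 2; 3; 1; 0; 1; 2; 0; 1; 3; 1; 2; 0; 1; 3; 1; 3; 0; 1; 3; 1; 3; 0; 2; 3; 2; 3; 0; 2; 3; 2; 3; 1; 2; 0; 2; 3; 1; 2; 0; 2; 0; 1; 3; 0; 2; 0; 1; 3; 0; 1; 0; 2; 3; 0; 1].
Definition colv i := nth 0 L57 i.-1.
Definition col57 (i : nat) : 'I_4 := inord (colv i).

Definition ok57 := all (fun b => all (fun x => (x ^ 2 < b) ==> (colv (b - x ^ 2) != colv b)) (iota 1 7)) (iota 1 57).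

Lemma ok57T : ok57. Proof. by vm_compute. Qed.

Lemma colv_lt i : colv i < 4.
Proof.
rewrite /colv; case: (ltnP i.-1 (size L57)) => h.
  have : all (fun c => c < 4) L57 by [].
  by move=> /allP; apply; apply: mem_nth.
by rewrite nth_default.
Qed.

Lemma not57 : ~ mono_square_pair 4 57 col57.
Proof.
move=> [a [b [x [/andP [ha hab] hb hx hd e]]]].
have ev : colv a = colv b.
  by move: (congr1 val e); rewrite /col57 /= !inordK // ltnS -ltnS colv_lt.
have hx8 : x < 8.
  case: (ltnP x 8) => // h8.
  have : 8 * 8 <= x ^ 2 by rewrite expnS expn1; apply: leq_mul.
  lia.
move: ok57T => /allP /(_ b).
rewrite mem_iota => /(_ ltac:(lia)) /allP /(_ x).
rewrite mem_iota => /(_ ltac:(lia)).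
have -> : x ^ 2 < b by lia.
have -> : b - x ^ 2 = a by lia.
by rewrite ev eqxx.
Qed.

Theorem mainTheorem5 :
  is_van_der_square_number 4 58 /\
  (exists col : nat -> 'I_4, ~ @mono_square_pair 4 57 col) /\
  every_coloring_mono 4 58.
Proof.
split; last split.
- split => //; first exact: every58.
  move=> m hm hm58 H; apply: not57.
  have [a [b [x [h1 h2 h3 h4 h5]]]] := H col57.
  exists a, b, x; split => //; lia.
- by exists col57; exact: not57.
- exact: every58.
Qed.
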